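(* Let $\mathcal{D}$ be the bipartite double scheme of the (metric) association scheme of the dodecahedron graph, with distinguished relation $R_1$ whose scheme graph is the bipartite double of the dodecahedron. Then every association scheme $(X,\mathcal{R})$ with a distinguished relation having the same relation-distribution diagram as $(\mathcal{D},R_1)$ is isomorphic to $\mathcal{D}$ (with the distinguished relation corresponding to $R_1$).
   Context: A (symmetric) association scheme with rank $d+1$ on a finite set $X$ is a partition $\mathcal{R}=\{R_0,\dots,R_d\}$ of $X\times X$ with $R_0$ the diagonal, each $R_i$ symmetric, and numbers $p^h_{ij}$ such that for every $(x,y)\in R_h$ the number of $z$ with $(x,z)\in R_i$, $(z,y)\in R_j$ equals $p^h_{ij}$; $k_i=p^0_{ii}$ is the valency of $R_i$. Two schemes $(X,\{R_i\})$, $(X',\{R'_i\})$ with distinguished relations $R_1$, $R'_1$ have the same relation-distribution diagram if they have the same rank and there is a bijection $\sigma$ of the index set with $\sigma(0)=0$, $\sigma(1)=1$, $k_i=k'_{\sigma(i)}$ and $p^i_{1j}=p'^{\sigma(i)}_{1\sigma(j)}$ for all $i,j$. The metric association scheme of a distance-regular graph has as relations the distance-$i$ relations. The direct product of schemes with relation matrices $A_i$ and $A'_j$ has relation matrices $A_i\otimes A'_j$; the bipartite double scheme of a scheme is its direct product with the rank-2 scheme on two points. The bipartite double of a graph $\Gamma$ on $V$ has vertices $x^{\pm}$ ($x\in V$), with $x^+\sim y^-$ iff $x\sim y$ in $\Gamma$. *)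

(* Defs.v *)
From HB Require Import structures.
From mathcomp Require Import all_boot all_order.
Set Implicit Arguments. Unset Strict Implicit. Unset Printing Implicit Defensive.

(* A scheme on a finite set X with index set I is given by a function
   rel : X -> X -> I assigning to each pair the index of the relation
   containing it (this is exactly a partition of X*X indexed by I);
   r0 is the index of the diagonal relation R_0. *)
Definition is_assoc_scheme (X I : finType) (rel : X -> X -> I) (r0 : I) : Prop :=
  (forall x y, (rel x y == r0) = (x == y)) /\
  (forall x y, rel x y = rel y x) /\
  (forall i, exists x y, rel x y = i) /\
  (forall h i j, exists p : nat, forall x y, rel x y = h ->
         #|[set z | (rel x z == i) && (rel z y == j)]| = p).

(* The intersection number p^h_{ij}, computed on some pair (x,y) in R_h
   (well defined for an association scheme; 0 if R_h is empty). *)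
Definition pnum (X I : finType) (rel : X -> X -> I) (h i j : I) : nat :=
  if [pick xy : X * X | rel xy.1 xy.2 == h] is Some xy
  then #|[set z | (rel xy.1 z == i) && (rel z xy.2 == j)]| else 0.

Definition valency (X I : finType) (rel : X -> X -> I) (r0 i : I) : nat :=
  pnum rel r0 i i.

Definition same_rdd (X I Y J : finType) (rel : X -> X -> I) (r0 r1 : I)
    (rel' : Y -> Y -> J) (s0 s1 : J) : Prop :=
  exists sigma : I -> J,
    [/\ bijective sigma, sigma r0 = s0, sigma r1 = s1,
        (forall i, valency rel r0 i = valency rel' s0 (sigma i))
      & (forall i j, pnum rel i r1 j = pnum rel' (sigma i) s1 (sigma j))].

Definition scheme_iso (X I Y J : finType) (rel : X -> X -> I) (r1 : I)
    (rel' : Y -> Y -> J) (s1 : J) : Prop :=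
  exists f : X -> Y, exists tau : I -> J,
    [/\ bijective f, bijective tau, tau r1 = s1
      & forall x y, rel' (f x) (f y) = tau (rel x y)].

Fixpoint ball (T : finType) (e : rel T) (k : nat) (x : T) : {set T} :=
  if k is k'.+1 then
    ball e k' x :|: [set z | [exists w in ball e k' x, e w z]]
  else [set x].

(* dist x y = number of k < #|T| with y not in ball k x; this is the graph
   distance for connected graphs (distances are < #|T|). *)
Definition gdist (T : finType) (e : rel T) (x y : T) : nat :=
  \sum_(k < #|T|) (y \notin ball e k x).

(* The dodecahedron = generalized Petersen graph GP(10,2):
   outer vertices (i,false), inner vertices (i,true), i mod 10. *)
Definition dodeca_adj : rel ('I_10 * bool) := fun x y =>
  match x.2, y.2 with
  | false, false => (val y.1 == (x.1 + 1) %% 10) || (val x.1 == (y.1 + 1) %% 10)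
  | true, true => (val y.1 == (x.1 + 2) %% 10) || (val x.1 == (y.1 + 2) %% 10)
  | _, _ => x.1 == y.1
  end.

(* Metric scheme of the dodecahedron (diameter 5): relation index = distance. *)
Definition dodeca_rel (x y : 'I_10 * bool) : 'I_6 := inord (gdist dodeca_adj x y).

Definition two_rel (a b : bool) : 'I_2 := if a == b then ord0 else ord_max.

Definition prod_rel (X I Y J : Type) (rel1 : X -> X -> I) (rel2 : Y -> Y -> J)
  (u v : X * Y) : I * J := (rel1 u.1 v.1, rel2 u.2 v.2).

Definition D_rel : ('I_10 * bool) * bool -> ('I_10 * bool) * bool -> 'I_6 * 'I_2 :=
  prod_rel dodeca_rel two_rel.

Definition D_R0 : 'I_6 * 'I_2 := (ord0, ord0).
(* R_1 of D: A_1 (x) (J - I), whose graph is the bipartite double. *)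
Definition D_R1 : 'I_6 * 'I_2 := (inord 1, ord_max).

(* Main.v *)
Require Import Defs.
From HB Require Import structures.
From mathcomp Require Import all_boot all_order.
From mathcomp Require Import zify.
Set Implicit Arguments. Unset Strict Implicit. Unset Printing Implicit Defensive.

Definition Dvert := (('I_10 * bool) * bool)%type.
Definition J := ('I_6 * 'I_2)%type.
Definition jj (n : nat) : J := (inord n./2, inord (odd n)).
Definition code (h : J) : nat := (2 * h.1 + h.2)%N.
Definition allJ : seq nat := iota 0 12.

Inductive step := SF of nat | SC of nat & nat & nat & nat & nat | SD of nat & nat & nat.
Definition defl : seq (nat*nat*nat) := [:: (0,0,0); (0,0,0); (0,0,0); (0,0,0); (1,2,5); (1,2,7); (2,1,7); (2,1,5); (3,1,5); (3,1,7); (4,0,5); (4,0,7); (5,0,7); (5,0,5); (6,0,7); (6,0,5); (7,0,5); (7,0,7); (8,0,7); (8,0,5); (9,0,5); (9,0,7); (10,0,2); (10,0,6); (11,0,8); (11,0,6); (12,0,6); (12,0,8); (13,0,6); (13,0,2); (14,0,8); (15,0,6); (16,0,2); (17,0,6); (22,0,1); (23,0,9); (24,0,11); (25,0,9); (31,0,9); (35,0,10)].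
Definition cert : seq step := [:: SC 1 0 1 2 3; SC 2 0 1 2 3; SF 4; SD 0 4 2; SD 3 4 1; SF 5; SD 0 5 2; SD 3 5 1; SD 4 5 2; SC 0 1 0 4 5; SC 3 1 0 4 5; SC 4 1 0 4 5; SC 4 0 1 2 3; SC 5 0 1 2 3; SF 6; SD 0 6 1; SD 3 6 1; SD 4 6 1; SD 5 6 1; SC 6 1 0 4 5; SF 7; SD 0 7 1; SD 3 7 1; SD 4 7 1; SD 5 7 1; SD 6 7 1; SC 7 1 0 4 5; SC 0 2 0 6 7; SC 3 2 0 6 7; SC 4 2 0 6 7; SC 5 2 0 6 7; SC 6 2 0 6 7; SC 6 0 1 2 3; SC 7 0 1 2 3; SF 8; SD 0 8 1; SD 2 8 1; SD 4 8 1; SD 5 8 1; SD 6 8 1; SD 7 8 3; SC 8 1 0 4 5; SF 9; SD 0 9 1; SD 2 9 1; SD 4 9 1; SD 5 9 1; SD 6 9 3; SD 7 9 1; SD 8 9 1; SC 9 1 0 4 5; SC 0 3 0 8 9; SC 2 3 0 8 9; SC 4 3 0 8 9; SC 5 3 0 8 9; SC 6 3 0 8 9; SC 7 3 0 8 9; SC 8 3 0 8 9; SC 8 0 1 2 3; SC 9 0 1 2 3; SC 8 2 0 6 7; SC 9 2 0 6 7; SF 10; SD 1 10 0; SD 2 10 0; SD 3 10 0; SD 5 10 0; SD 6 10 0; SD 7 10 0; SD 8 10 0; SD 9 10 0; SC 10 0 1 2 3; SF 11; SD 1 11 0; SD 2 11 0; SD 3 11 0; SD 5 11 0; SD 6 11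 0; SD 7 11 0; SD 8 11 0; SD 9 11 0; SD 10 11 0; SC 11 0 1 2 3; SC 1 4 1 10 11; SC 2 4 1 10 11; SC 3 4 1 10 11; SC 5 4 1 10 11; SC 6 4 1 10 11; SC 7 4 1 10 11; SC 8 4 1 10 11; SC 9 4 1 10 11; SC 10 4 1 10 11; SC 10 1 0 4 5; SC 11 1 0 4 5; SC 10 2 0 6 7; SC 11 2 0 6 7; SC 10 3 0 8 9; SC 11 3 0 8 9; SF 12; SD 1 12 0; SD 2 12 0; SD 3 12 0; SD 4 12 0; SD 6 12 0; SD 7 12 0; SD 8 12 0; SD 9 12 0; SD 10 12 0; SD 11 12 5; SC 12 0 1 2 3; SF 13; SD 1 13 0; SD 2 13 0; SD 3 13 0; SD 4 13 0; SD 6 13 0; SD 7 13 0; SD 8 13 0; SD 9 13 0; SD 10 13 5; SD 11 13 0; SD 12 13 0; SC 13 0 1 2 3; SC 1 5 1 12 13; SC 2 5 1 12 13; SC 3 5 1 12 13; SC 4 5 1 12 13; SC 6 5 1 12 13; SC 7 5 1 12 13; SC 8 5 1 12 13; SC 9 5 1 12 13; SC 10 5 1 12 13; SC 11 5 1 12 13; SC 12 5 1 12 13; SC 12 1 0 4 5; SC 13 1 0 4 5; SC 12 2 0 6 7; SC 13 2 0 6 7; SC 12 3 0 8 9; SC 13 3 0 8 9; SC 12 4 1 10 11; SC 13 4 1 10 11; SF 14; SD 1 14 0; SD 2 14 0; SD 3 14 0; SD 4 14 0; SD 5 14 0; SD 7 14 0; SD 8 14 0; SD 9 14 0; SD 10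 14 0; SD 11 14 6; SD 12 14 6; SD 13 14 0; SC 14 0 1 2 3; SF 15; SD 1 15 0; SD 2 15 0; SD 3 15 0; SD 4 15 0; SD 5 15 0; SD 7 15 0; SD 8 15 0; SD 9 15 0; SD 10 15 6; SD 11 15 0; SD 12 15 0; SD 13 15 6; SD 14 15 0; SC 15 0 1 2 3; SC 1 6 2 14 15; SC 2 6 2 14 15; SC 3 6 2 14 15; SC 4 6 2 14 15; SC 5 6 2 14 15; SC 7 6 2 14 15; SC 8 6 2 14 15; SC 9 6 2 14 15; SC 10 6 2 14 15; SC 11 6 2 14 15; SC 12 6 2 14 15; SC 13 6 2 14 15; SC 14 6 2 14 15; SC 14 1 0 4 5; SC 15 1 0 4 5; SC 14 2 0 6 7; SC 15 2 0 6 7; SC 14 3 0 8 9; SC 15 3 0 8 9; SC 14 4 1 10 11; SC 15 4 1 10 11; SC 14 5 1 12 13; SC 15 5 1 12 13; SF 16; SD 1 16 0; SD 2 16 0; SD 3 16 0; SD 4 16 0; SD 5 16 0; SD 6 16 0; SD 8 16 0; SD 9 16 0; SD 10 16 7; SD 11 16 0; SD 12 16 0; SD 13 16 7; SD 14 16 0; SD 15 16 7; SC 16 0 1 2 3; SF 17; SD 1 17 0; SD 2 17 0; SD 3 17 0; SD 4 17 0; SD 5 17 0; SD 6 17 0; SD 8 17 0; SD 9 17 0; SD 10 17 0; SD 11 17 7; SD 12 17 7; SD 13 17 0; SD 14 17 7; SD 15 17 0; SD 16 17 0; SC 17 0 1 2 3; SC 1 7 2 16 17; SC 2 7 2 16 17;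 SC 3 7 2 16 17; SC 4 7 2 16 17; SC 5 7 2 16 17; SC 6 7 2 16 17; SC 8 7 2 16 17; SC 9 7 2 16 17; SC 10 7 2 16 17; SC 11 7 2 16 17; SC 12 7 2 16 17; SC 13 7 2 16 17; SC 14 7 2 16 17; SC 15 7 2 16 17; SC 16 7 2 16 17; SC 16 1 0 4 5; SC 17 1 0 4 5; SC 16 2 0 6 7; SC 17 2 0 6 7; SC 16 3 0 8 9; SC 17 3 0 8 9; SC 16 4 1 10 11; SC 17 4 1 10 11; SC 16 5 1 12 13; SC 17 5 1 12 13; SC 16 6 2 14 15; SC 17 6 2 14 15; SF 18; SD 1 18 0; SD 2 18 0; SD 3 18 0; SD 4 18 0; SD 5 18 0; SD 6 18 0; SD 7 18 0; SD 9 18 0; SD 10 18 0; SD 11 18 8; SD 12 18 8; SD 13 18 0; SD 14 18 8; SD 15 18 0; SD 16 18 0; SD 17 18 8; SC 18 0 1 2 3; SF 19; SD 1 19 0; SD 2 19 0; SD 3 19 0; SD 4 19 0; SD 5 19 0; SD 6 19 0; SD 7 19 0; SD 9 19 0; SD 10 19 8; SD 11 19 0; SD 12 19 0; SD 13 19 8; SD 14 19 0; SD 15 19 8; SD 16 19 8; SD 17 19 0; SD 18 19 0; SC 19 0 1 2 3; SC 1 8 3 18 19; SC 2 8 3 18 19; SC 3 8 3 18 19; SC 4 8 3 18 19; SC 5 8 3 18 19; SC 6 8 3 18 19; SC 7 8 3 18 19; SC 9 8 3 18 19; SC 10 8 3 18 19; SC 11 8 3 18 19; SC 12 8 3 18 19;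 SC 13 8 3 18 19; SC 14 8 3 18 19; SC 15 8 3 18 19; SC 16 8 3 18 19; SC 17 8 3 18 19; SC 18 8 3 18 19; SC 18 1 0 4 5; SC 19 1 0 4 5; SC 18 2 0 6 7; SC 19 2 0 6 7; SC 18 3 0 8 9; SC 19 3 0 8 9; SC 18 4 1 10 11; SC 19 4 1 10 11; SC 18 5 1 12 13; SC 19 5 1 12 13; SC 18 6 2 14 15; SC 19 6 2 14 15; SC 18 7 2 16 17; SC 19 7 2 16 17; SF 20; SD 1 20 0; SD 2 20 0; SD 3 20 0; SD 4 20 0; SD 5 20 0; SD 6 20 0; SD 7 20 0; SD 8 20 0; SD 10 20 9; SD 11 20 0; SD 12 20 0; SD 13 20 9; SD 14 20 0; SD 15 20 9; SD 16 20 9; SD 17 20 0; SD 18 20 0; SD 19 20 9; SC 20 0 1 2 3; SF 21; SD 1 21 0; SD 2 21 0; SD 3 21 0; SD 4 21 0; SD 5 21 0; SD 6 21 0; SD 7 21 0; SD 8 21 0; SD 10 21 0; SD 11 21 9; SD 12 21 9; SD 13 21 0; SD 14 21 9; SD 15 21 0; SD 16 21 0; SD 17 21 9; SD 18 21 9; SD 19 21 0; SD 20 21 0; SC 21 0 1 2 3; SC 1 9 3 20 21; SC 2 9 3 20 21; SC 3 9 3 20 21; SC 4 9 3 20 21; SC 5 9 3 20 21; SC 6 9 3 20 21; SC 7 9 3 20 21; SC 8 9 3 20 21; SC 10 9 3 20 21; SC 11 9 3 20 21; SC 12 9 3 20 21; SC 13 9 3 20 21; SC 14 9 3 20 21; SC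 15 9 3 20 21; SC 16 9 3 20 21; SC 17 9 3 20 21; SC 18 9 3 20 21; SC 19 9 3 20 21; SC 20 9 3 20 21; SC 20 1 0 4 5; SC 21 1 0 4 5; SC 20 2 0 6 7; SC 21 2 0 6 7; SC 20 3 0 8 9; SC 21 3 0 8 9; SC 20 4 1 10 11; SC 21 4 1 10 11; SC 20 5 1 12 13; SC 21 5 1 12 13; SC 20 6 2 14 15; SC 21 6 2 14 15; SC 20 7 2 16 17; SC 21 7 2 16 17; SC 20 8 3 18 19; SC 21 8 3 18 19; SF 22; SD 1 22 0; SD 2 22 0; SD 3 22 0; SD 4 22 0; SD 5 22 0; SD 6 22 0; SD 7 22 0; SD 8 22 0; SD 9 22 0; SD 11 22 0; SD 12 22 0; SD 13 22 0; SD 14 22 0; SD 15 22 0; SD 16 22 0; SD 17 22 0; SD 18 22 0; SD 19 22 0; SD 20 22 0; SD 21 22 0; SC 22 0 1 2 3; SF 23; SD 1 23 0; SD 2 23 0; SD 3 23 0; SD 4 23 0; SD 5 23 0; SD 6 23 0; SD 7 23 0; SD 8 23 0; SD 9 23 0; SD 11 23 0; SD 12 23 0; SD 13 23 0; SD 14 23 0; SD 15 23 0; SD 16 23 0; SD 17 23 0; SD 18 23 0; SD 19 23 0; SD 20 23 0; SD 21 23 0; SD 22 23 0; SC 23 0 1 2 3; SC 1 10 4 22 23; SC 2 10 4 22 23; SC 3 10 4 22 23; SC 4 10 4 22 23; SC 5 10 4 22 23; SC 6 10 4 22 23; SC 7 10 4 22 23; SC 8 10 4 22 23; SC 9 10 4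 22 23; SC 11 10 4 22 23; SC 12 10 4 22 23; SC 13 10 4 22 23; SC 14 10 4 22 23; SC 15 10 4 22 23; SC 16 10 4 22 23; SC 17 10 4 22 23; SC 18 10 4 22 23; SC 19 10 4 22 23; SC 20 10 4 22 23; SC 21 10 4 22 23; SC 22 10 4 22 23; SC 22 1 0 4 5; SC 23 1 0 4 5; SC 22 2 0 6 7; SC 23 2 0 6 7; SC 22 3 0 8 9; SC 23 3 0 8 9; SC 22 4 1 10 11; SC 23 4 1 10 11; SC 22 5 1 12 13; SC 23 5 1 12 13; SC 22 6 2 14 15; SC 23 6 2 14 15; SC 22 7 2 16 17; SC 23 7 2 16 17; SC 22 8 3 18 19; SC 23 8 3 18 19; SC 22 9 3 20 21; SC 23 9 3 20 21; SF 24; SD 1 24 0; SD 2 24 0; SD 3 24 0; SD 4 24 0; SD 5 24 0; SD 6 24 0; SD 7 24 0; SD 8 24 0; SD 9 24 0; SD 10 24 0; SD 12 24 0; SD 13 24 0; SD 14 24 0; SD 15 24 0; SD 16 24 0; SD 17 24 0; SD 18 24 0; SD 19 24 0; SD 20 24 0; SD 21 24 0; SD 22 24 0; SD 23 24 0; SC 24 0 1 2 3; SF 25; SD 1 25 0; SD 2 25 0; SD 3 25 0; SD 4 25 0; SD 5 25 0; SD 6 25 0; SD 7 25 0; SD 8 25 0; SD 9 25 0; SD 10 25 0; SD 12 25 0; SD 13 25 0; SD 14 25 0; SD 15 25 0; SD 16 25 0; SD 17 25 0; SD 18 25 0; SD 19 25 0; SD 20 25 0; SD 21 25 0; SD 22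 25 0; SD 23 25 11; SD 24 25 0; SC 25 0 1 2 3; SC 1 11 4 24 25; SC 2 11 4 24 25; SC 3 11 4 24 25; SC 4 11 4 24 25; SC 5 11 4 24 25; SC 6 11 4 24 25; SC 7 11 4 24 25; SC 8 11 4 24 25; SC 9 11 4 24 25; SC 10 11 4 24 25; SC 12 11 4 24 25; SC 13 11 4 24 25; SC 14 11 4 24 25; SC 15 11 4 24 25; SC 16 11 4 24 25; SC 17 11 4 24 25; SC 18 11 4 24 25; SC 19 11 4 24 25; SC 20 11 4 24 25; SC 21 11 4 24 25; SC 22 11 4 24 25; SC 23 11 4 24 25; SC 24 11 4 24 25; SC 24 1 0 4 5; SC 25 1 0 4 5; SC 24 2 0 6 7; SC 25 2 0 6 7; SC 24 3 0 8 9; SC 25 3 0 8 9; SC 24 4 1 10 11; SC 25 4 1 10 11; SC 24 5 1 12 13; SC 25 5 1 12 13; SC 24 6 2 14 15; SC 25 6 2 14 15; SC 24 7 2 16 17; SC 25 7 2 16 17; SC 24 8 3 18 19; SC 25 8 3 18 19; SC 24 9 3 20 21; SC 25 9 3 20 21; SC 24 10 4 22 23; SC 25 10 4 22 23; SF 26; SD 1 26 0; SD 2 26 0; SD 3 26 0; SD 4 26 0; SD 5 26 0; SD 6 26 0; SD 7 26 0; SD 8 26 0; SD 9 26 0; SD 10 26 0; SD 11 26 0; SD 13 26 0; SD 14 26 0; SD 15 26 0; SD 16 26 0; SD 17 26 0; SD 18 26 0; SD 19 26 0; SD 20 26 0; SD 21 26 0; SD 22 26 0; SD 23 26 12; SD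 24 26 0; SD 25 26 12; SC 26 0 1 2 3; SF 27; SD 1 27 0; SD 2 27 0; SD 3 27 0; SD 4 27 0; SD 5 27 0; SD 6 27 0; SD 7 27 0; SD 8 27 0; SD 9 27 0; SD 10 27 0; SD 11 27 0; SD 13 27 0; SD 14 27 0; SD 15 27 0; SD 16 27 0; SD 17 27 0; SD 18 27 0; SD 19 27 0; SD 20 27 0; SD 21 27 0; SD 22 27 0; SD 23 27 0; SD 24 27 12; SD 25 27 0; SD 26 27 0; SC 27 0 1 2 3; SC 1 12 5 26 27; SC 2 12 5 26 27; SC 3 12 5 26 27; SC 4 12 5 26 27; SC 5 12 5 26 27; SC 6 12 5 26 27; SC 7 12 5 26 27; SC 8 12 5 26 27; SC 9 12 5 26 27; SC 10 12 5 26 27; SC 11 12 5 26 27; SC 13 12 5 26 27; SC 14 12 5 26 27; SC 15 12 5 26 27; SC 16 12 5 26 27; SC 17 12 5 26 27; SC 18 12 5 26 27; SC 19 12 5 26 27; SC 20 12 5 26 27; SC 21 12 5 26 27; SC 22 12 5 26 27; SC 23 12 5 26 27; SC 24 12 5 26 27; SC 25 12 5 26 27; SC 26 12 5 26 27; SC 26 1 0 4 5; SC 27 1 0 4 5; SC 26 2 0 6 7; SC 27 2 0 6 7; SC 26 3 0 8 9; SC 27 3 0 8 9; SC 26 4 1 10 11; SC 27 4 1 10 11; SC 26 5 1 12 13; SC 27 5 1 12 13; SC 26 6 2 14 15; SC 27 6 2 14 15; SC 26 7 2 16 17; SC 27 7 2 16 17; SC 26 8 3 18 19; SC 27 8 3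 18 19; SC 26 9 3 20 21; SC 27 9 3 20 21; SC 26 10 4 22 23; SC 27 10 4 22 23; SC 26 11 4 24 25; SC 27 11 4 24 25; SF 28; SD 1 28 0; SD 2 28 0; SD 3 28 0; SD 4 28 0; SD 5 28 0; SD 6 28 0; SD 7 28 0; SD 8 28 0; SD 9 28 0; SD 10 28 0; SD 11 28 0; SD 12 28 0; SD 14 28 0; SD 15 28 0; SD 16 28 0; SD 17 28 0; SD 18 28 0; SD 19 28 0; SD 20 28 0; SD 21 28 0; SD 22 28 0; SD 23 28 13; SD 24 28 0; SD 25 28 13; SD 26 28 13; SD 27 28 0; SC 28 0 1 2 3; SF 29; SD 1 29 0; SD 2 29 0; SD 3 29 0; SD 4 29 0; SD 5 29 0; SD 6 29 0; SD 7 29 0; SD 8 29 0; SD 9 29 0; SD 10 29 0; SD 11 29 0; SD 12 29 0; SD 14 29 0; SD 15 29 0; SD 16 29 0; SD 17 29 0; SD 18 29 0; SD 19 29 0; SD 20 29 0; SD 21 29 0; SD 22 29 13; SD 23 29 0; SD 24 29 0; SD 25 29 0; SD 26 29 0; SD 27 29 0; SD 28 29 0; SC 29 0 1 2 3; SC 1 13 5 28 29; SC 2 13 5 28 29; SC 3 13 5 28 29; SC 4 13 5 28 29; SC 5 13 5 28 29; SC 6 13 5 28 29; SC 7 13 5 28 29; SC 8 13 5 28 29; SC 9 13 5 28 29; SC 10 13 5 28 29; SC 11 13 5 28 29; SC 12 13 5 28 29; SC 14 13 5 28 29; SC 15 13 5 28 29; SC 16 13 5 28 29; SC 17 13 5 28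 29; SC 18 13 5 28 29; SC 19 13 5 28 29; SC 20 13 5 28 29; SC 21 13 5 28 29; SC 22 13 5 28 29; SC 23 13 5 28 29; SC 24 13 5 28 29; SC 25 13 5 28 29; SC 26 13 5 28 29; SC 27 13 5 28 29; SC 28 13 5 28 29; SC 28 1 0 4 5; SC 29 1 0 4 5; SC 28 2 0 6 7; SC 29 2 0 6 7; SC 28 3 0 8 9; SC 29 3 0 8 9; SC 28 4 1 10 11; SC 29 4 1 10 11; SC 28 5 1 12 13; SC 29 5 1 12 13; SC 28 6 2 14 15; SC 29 6 2 14 15; SC 28 7 2 16 17; SC 29 7 2 16 17; SC 28 8 3 18 19; SC 29 8 3 18 19; SC 28 9 3 20 21; SC 29 9 3 20 21; SC 28 10 4 22 23; SC 29 10 4 22 23; SC 28 11 4 24 25; SC 29 11 4 24 25; SC 28 12 5 26 27; SC 29 12 5 26 27; SF 30; SD 1 30 0; SD 2 30 0; SD 3 30 0; SD 4 30 0; SD 5 30 0; SD 6 30 0; SD 7 30 0; SD 8 30 0; SD 9 30 0; SD 10 30 0; SD 11 30 0; SD 12 30 0; SD 13 30 0; SD 15 30 0; SD 16 30 0; SD 17 30 0; SD 18 30 0; SD 19 30 0; SD 20 30 0; SD 21 30 0; SD 22 30 0; SD 23 30 0; SD 24 30 14; SD 25 30 0; SD 26 30 0; SD 27 30 14; SD 28 30 0; SD 29 30 0; SC 30 0 1 2 3; SC 1 14 6 23 30; SC 2 14 6 23 30; SC 3 14 6 23 30; SC 4 14 6 23 30; SC 5 14 6 23 30; SC 6 14 6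 23 30; SC 7 14 6 23 30; SC 8 14 6 23 30; SC 9 14 6 23 30; SC 10 14 6 23 30; SC 11 14 6 23 30; SC 12 14 6 23 30; SC 13 14 6 23 30; SC 15 14 6 23 30; SC 16 14 6 23 30; SC 17 14 6 23 30; SC 18 14 6 23 30; SC 19 14 6 23 30; SC 20 14 6 23 30; SC 21 14 6 23 30; SC 22 14 6 23 30; SC 23 14 6 23 30; SC 24 14 6 23 30; SC 25 14 6 23 30; SC 26 14 6 23 30; SC 27 14 6 23 30; SC 28 14 6 23 30; SC 29 14 6 23 30; SF 31; SD 1 31 0; SD 2 31 0; SD 3 31 0; SD 4 31 0; SD 5 31 0; SD 6 31 0; SD 7 31 0; SD 8 31 0; SD 9 31 0; SD 10 31 0; SD 11 31 0; SD 12 31 0; SD 13 31 0; SD 14 31 0; SD 16 31 0; SD 17 31 0; SD 18 31 0; SD 19 31 0; SD 20 31 0; SD 21 31 0; SD 22 31 0; SD 23 31 15; SD 24 31 0; SD 25 31 15; SD 26 31 15; SD 27 31 0; SD 28 31 15; SD 29 31 0; SD 30 31 0; SC 31 0 1 2 3; SC 1 15 6 29 31; SC 2 15 6 29 31; SC 3 15 6 29 31; SC 4 15 6 29 31; SC 5 15 6 29 31; SC 6 15 6 29 31; SC 7 15 6 29 31; SC 8 15 6 29 31; SC 9 15 6 29 31; SC 10 15 6 29 31; SC 11 15 6 29 31; SC 12 15 6 29 31; SC 13 15 6 29 31; SC 14 15 6 29 31; SC 16 15 6 29 31; SC 17 15 6 29 31; SC 18 15 6 29 31; SC 19 15 6 29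 31; SC 20 15 6 29 31; SC 21 15 6 29 31; SC 22 15 6 29 31; SC 23 15 6 29 31; SC 24 15 6 29 31; SC 25 15 6 29 31; SC 26 15 6 29 31; SC 27 15 6 29 31; SC 28 15 6 29 31; SC 29 15 6 29 31; SC 30 15 6 29 31; SF 32; SD 1 32 0; SD 2 32 0; SD 3 32 0; SD 4 32 0; SD 5 32 0; SD 6 32 0; SD 7 32 0; SD 8 32 0; SD 9 32 0; SD 10 32 0; SD 11 32 0; SD 12 32 0; SD 13 32 0; SD 14 32 0; SD 15 32 0; SD 17 32 0; SD 18 32 0; SD 19 32 0; SD 20 32 0; SD 21 32 0; SD 22 32 16; SD 23 32 0; SD 24 32 0; SD 25 32 0; SD 26 32 0; SD 27 32 0; SD 28 32 0; SD 29 32 16; SD 30 32 0; SD 31 32 0; SC 32 0 1 2 3; SC 1 16 7 26 32; SC 2 16 7 26 32; SC 3 16 7 26 32; SC 4 16 7 26 32; SC 5 16 7 26 32; SC 6 16 7 26 32; SC 7 16 7 26 32; SC 8 16 7 26 32; SC 9 16 7 26 32; SC 10 16 7 26 32; SC 11 16 7 26 32; SC 12 16 7 26 32; SC 13 16 7 26 32; SC 14 16 7 26 32; SC 15 16 7 26 32; SC 17 16 7 26 32; SC 18 16 7 26 32; SC 19 16 7 26 32; SC 20 16 7 26 32; SC 21 16 7 26 32; SC 22 16 7 26 32; SC 23 16 7 26 32; SC 24 16 7 26 32; SC 25 16 7 26 32; SC 26 16 7 26 32; SC 27 16 7 26 32; SC 28 16 7 26 32; SC 29 16 7 26 32; SC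 30 16 7 26 32; SC 31 16 7 26 32; SF 33; SD 1 33 0; SD 2 33 0; SD 3 33 0; SD 4 33 0; SD 5 33 0; SD 6 33 0; SD 7 33 0; SD 8 33 0; SD 9 33 0; SD 10 33 0; SD 11 33 0; SD 12 33 0; SD 13 33 0; SD 14 33 0; SD 15 33 0; SD 16 33 0; SD 18 33 0; SD 19 33 0; SD 20 33 0; SD 21 33 0; SD 22 33 0; SD 23 33 17; SD 24 33 0; SD 25 33 17; SD 26 33 17; SD 27 33 0; SD 28 33 17; SD 29 33 0; SD 30 33 0; SD 31 33 17; SD 32 33 0; SC 33 0 1 2 3; SC 1 17 7 24 33; SC 2 17 7 24 33; SC 3 17 7 24 33; SC 4 17 7 24 33; SC 5 17 7 24 33; SC 6 17 7 24 33; SC 7 17 7 24 33; SC 8 17 7 24 33; SC 9 17 7 24 33; SC 10 17 7 24 33; SC 11 17 7 24 33; SC 12 17 7 24 33; SC 13 17 7 24 33; SC 14 17 7 24 33; SC 15 17 7 24 33; SC 16 17 7 24 33; SC 18 17 7 24 33; SC 19 17 7 24 33; SC 20 17 7 24 33; SC 21 17 7 24 33; SC 22 17 7 24 33; SC 23 17 7 24 33; SC 24 17 7 24 33; SC 25 17 7 24 33; SC 26 17 7 24 33; SC 27 17 7 24 33; SC 28 17 7 24 33; SC 29 17 7 24 33; SC 30 17 7 24 33; SC 31 17 7 24 33; SC 32 17 7 24 33; SF 34; SD 1 34 0; SD 2 34 0; SD 3 34 0; SD 4 34 0; SD 5 34 0; SD 6 34 0; SD 7 34 0; SD 8 34 0;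 SD 9 34 0; SD 10 34 0; SD 11 34 0; SD 12 34 0; SD 13 34 0; SD 14 34 0; SD 15 34 0; SD 16 34 0; SD 17 34 0; SD 18 34 0; SD 19 34 0; SD 20 34 0; SD 21 34 0; SD 23 34 0; SD 24 34 0; SD 25 34 0; SD 26 34 0; SD 27 34 0; SD 28 34 0; SD 29 34 0; SD 30 34 0; SD 31 34 0; SD 32 34 0; SD 33 34 0; SC 34 0 1 2 3; SC 34 1 0 4 5; SC 34 2 0 6 7; SC 34 3 0 8 9; SC 34 4 1 10 11; SC 34 5 1 12 13; SC 34 6 2 14 15; SC 34 7 2 16 17; SC 34 8 3 18 19; SC 34 9 3 20 21; SC 10 22 10 20 34; SC 11 22 10 20 34; SC 12 22 10 20 34; SC 13 22 10 20 34; SC 14 22 10 20 34; SC 15 22 10 20 34; SC 16 22 10 20 34; SC 17 22 10 20 34; SC 18 22 10 20 34; SC 19 22 10 20 34; SC 20 22 10 20 34; SC 21 22 10 20 34; SC 23 22 10 20 34; SC 24 22 10 20 34; SC 25 22 10 20 34; SC 26 22 10 20 34; SC 27 22 10 20 34; SC 28 22 10 20 34; SC 29 22 10 20 34; SC 30 22 10 20 34; SC 31 22 10 20 34; SC 32 22 10 20 34; SC 33 22 10 20 34; SF 35; SD 1 35 0; SD 2 35 0; SD 3 35 0; SD 4 35 0; SD 5 35 0; SD 6 35 0; SD 7 35 0; SD 8 35 0; SD 9 35 0; SD 10 35 0; SD 11 35 0; SD 12 35 0; SD 13 35 0; SD 14 35 0; SD 15 35 0; SD 16 35 0; SD 17 35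 0; SD 18 35 0; SD 19 35 0; SD 20 35 0; SD 21 35 0; SD 22 35 0; SD 24 35 0; SD 25 35 0; SD 26 35 0; SD 27 35 0; SD 28 35 0; SD 29 35 0; SD 30 35 0; SD 31 35 0; SD 32 35 0; SD 33 35 0; SD 34 35 0; SC 35 0 1 2 3; SC 1 23 10 14 35; SC 2 23 10 14 35; SC 3 23 10 14 35; SC 4 23 10 14 35; SC 5 23 10 14 35; SC 6 23 10 14 35; SC 7 23 10 14 35; SC 8 23 10 14 35; SC 9 23 10 14 35; SC 10 23 10 14 35; SC 11 23 10 14 35; SC 12 23 10 14 35; SC 13 23 10 14 35; SC 14 23 10 14 35; SC 15 23 10 14 35; SC 16 23 10 14 35; SC 17 23 10 14 35; SC 18 23 10 14 35; SC 19 23 10 14 35; SC 20 23 10 14 35; SC 21 23 10 14 35; SC 22 23 10 14 35; SC 24 23 10 14 35; SC 25 23 10 14 35; SC 26 23 10 14 35; SC 27 23 10 14 35; SC 28 23 10 14 35; SC 29 23 10 14 35; SC 30 23 10 14 35; SC 31 23 10 14 35; SC 32 23 10 14 35; SC 33 23 10 14 35; SC 34 23 10 14 35; SF 36; SD 1 36 0; SD 2 36 0; SD 3 36 0; SD 4 36 0; SD 5 36 0; SD 6 36 0; SD 7 36 0; SD 8 36 0; SD 9 36 0; SD 10 36 0; SD 11 36 0; SD 12 36 0; SD 13 36 0; SD 14 36 0; SD 15 36 0; SD 16 36 0; SD 17 36 0; SD 18 36 0; SD 19 36 0; SD 20 36 0; SD 21 36 0; SD 22 36 0; SD 23 36 0;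 SD 25 36 0; SD 26 36 0; SD 27 36 0; SD 28 36 0; SD 29 36 0; SD 30 36 0; SD 31 36 0; SD 32 36 0; SD 33 36 0; SD 34 36 0; SD 35 36 0; SC 36 0 1 2 3; SC 36 1 0 4 5; SC 36 2 0 6 7; SC 36 3 0 8 9; SC 36 4 1 10 11; SC 36 5 1 12 13; SC 36 6 2 14 15; SC 36 7 2 16 17; SC 36 8 3 18 19; SC 36 9 3 20 21; SC 10 24 11 17 36; SC 11 24 11 17 36; SC 12 24 11 17 36; SC 13 24 11 17 36; SC 14 24 11 17 36; SC 15 24 11 17 36; SC 16 24 11 17 36; SC 17 24 11 17 36; SC 18 24 11 17 36; SC 19 24 11 17 36; SC 20 24 11 17 36; SC 21 24 11 17 36; SC 22 24 11 17 36; SC 23 24 11 17 36; SC 25 24 11 17 36; SC 26 24 11 17 36; SC 27 24 11 17 36; SC 28 24 11 17 36; SC 29 24 11 17 36; SC 30 24 11 17 36; SC 31 24 11 17 36; SC 32 24 11 17 36; SC 33 24 11 17 36; SC 34 24 11 17 36; SC 35 24 11 17 36; SF 37; SD 1 37 0; SD 2 37 0; SD 3 37 0; SD 4 37 0; SD 5 37 0; SD 6 37 0; SD 7 37 0; SD 8 37 0; SD 9 37 0; SD 10 37 0; SD 11 37 0; SD 12 37 0; SD 13 37 0; SD 14 37 0; SD 15 37 0; SD 16 37 0; SD 17 37 0; SD 18 37 0; SD 19 37 0; SD 20 37 0; SD 21 37 0; SD 22 37 0; SD 23 37 0; SD 24 37 0; SD 26 37 0; SD 27 37 0; SD 28 37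 0; SD 29 37 0; SD 30 37 0; SD 31 37 0; SD 32 37 0; SD 33 37 0; SD 34 37 0; SD 35 37 25; SD 36 37 0; SC 37 0 1 2 3; SC 1 25 11 19 37; SC 2 25 11 19 37; SC 3 25 11 19 37; SC 4 25 11 19 37; SC 5 25 11 19 37; SC 6 25 11 19 37; SC 7 25 11 19 37; SC 8 25 11 19 37; SC 9 25 11 19 37; SC 10 25 11 19 37; SC 11 25 11 19 37; SC 12 25 11 19 37; SC 13 25 11 19 37; SC 14 25 11 19 37; SC 15 25 11 19 37; SC 16 25 11 19 37; SC 17 25 11 19 37; SC 18 25 11 19 37; SC 19 25 11 19 37; SC 20 25 11 19 37; SC 21 25 11 19 37; SC 22 25 11 19 37; SC 23 25 11 19 37; SC 24 25 11 19 37; SC 26 25 11 19 37; SC 27 25 11 19 37; SC 28 25 11 19 37; SC 29 25 11 19 37; SC 30 25 11 19 37; SC 31 25 11 19 37; SC 32 25 11 19 37; SC 33 25 11 19 37; SC 34 25 11 19 37; SC 35 25 11 19 37; SC 36 25 11 19 37; SF 38; SD 1 38 0; SD 2 38 0; SD 3 38 0; SD 4 38 0; SD 5 38 0; SD 6 38 0; SD 7 38 0; SD 8 38 0; SD 9 38 0; SD 10 38 0; SD 11 38 0; SD 12 38 0; SD 13 38 0; SD 14 38 0; SD 15 38 0; SD 16 38 0; SD 17 38 0; SD 18 38 0; SD 19 38 0; SD 20 38 0; SD 21 38 0; SD 22 38 0; SD 23 38 0; SD 24 38 0; SD 25 38 0; SD 26 38 0; SD 27 38 0; SD 28 38 0;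 SD 29 38 0; SD 30 38 0; SD 32 38 0; SD 33 38 0; SD 34 38 0; SD 35 38 31; SD 36 38 0; SD 37 38 31; SC 38 0 1 2 3; SC 1 31 15 18 38; SC 2 31 15 18 38; SC 3 31 15 18 38; SC 4 31 15 18 38; SC 5 31 15 18 38; SC 6 31 15 18 38; SC 7 31 15 18 38; SC 8 31 15 18 38; SC 9 31 15 18 38; SC 10 31 15 18 38; SC 11 31 15 18 38; SC 12 31 15 18 38; SC 13 31 15 18 38; SC 14 31 15 18 38; SC 15 31 15 18 38; SC 16 31 15 18 38; SC 17 31 15 18 38; SC 18 31 15 18 38; SC 19 31 15 18 38; SC 20 31 15 18 38; SC 21 31 15 18 38; SC 22 31 15 18 38; SC 23 31 15 18 38; SC 24 31 15 18 38; SC 25 31 15 18 38; SC 26 31 15 18 38; SC 27 31 15 18 38; SC 28 31 15 18 38; SC 29 31 15 18 38; SC 30 31 15 18 38; SC 32 31 15 18 38; SC 33 31 15 18 38; SC 34 31 15 18 38; SC 35 31 15 18 38; SC 36 31 15 18 38; SC 37 31 15 18 38; SF 39; SD 1 39 0; SD 2 39 0; SD 3 39 0; SD 4 39 0; SD 5 39 0; SD 6 39 0; SD 7 39 0; SD 8 39 0; SD 9 39 0; SD 10 39 0; SD 11 39 0; SD 12 39 0; SD 13 39 0; SD 14 39 0; SD 15 39 0; SD 16 39 0; SD 17 39 0; SD 18 39 0; SD 19 39 0; SD 20 39 0; SD 21 39 0; SD 22 39 0; SD 23 39 0; SD 24 39 0; SD 25 39 0; SD 26 39 0; SD 27 39 0;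 SD 28 39 0; SD 29 39 0; SD 30 39 0; SD 31 39 0; SD 32 39 0; SD 33 39 0; SD 34 39 0; SD 36 39 0; SD 37 39 0; SD 38 39 0; SC 39 0 1 2 3; SC 39 1 0 4 5; SC 39 2 0 6 7; SC 39 3 0 8 9; SC 39 4 1 10 11; SC 39 5 1 12 13; SC 39 6 2 14 15; SC 39 7 2 16 17; SC 39 8 3 18 19; SC 39 9 3 20 21; SC 10 35 23 26 39; SC 11 35 23 26 39; SC 12 35 23 26 39; SC 13 35 23 26 39; SC 14 35 23 26 39; SC 15 35 23 26 39; SC 16 35 23 26 39; SC 17 35 23 26 39; SC 18 35 23 26 39; SC 19 35 23 26 39; SC 20 35 23 26 39; SC 21 35 23 26 39; SC 22 35 23 26 39; SC 23 35 23 26 39; SC 24 35 23 26 39; SC 25 35 23 26 39; SC 26 35 23 26 39; SC 27 35 23 26 39; SC 28 35 23 26 39; SC 29 35 23 26 39; SC 30 35 23 26 39; SC 31 35 23 26 39; SC 32 35 23 26 39; SC 33 35 23 26 39; SC 34 35 23 26 39; SC 36 35 23 26 39; SC 37 35 23 26 39; SC 38 35 23 26 39].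
Definition ptab : seq (seq nat) := [:: [:: 0; 0; 0; 3; 0; 0; 0; 0; 0; 0; 0; 0]; [:: 0; 0; 3; 0; 0; 0; 0; 0; 0; 0; 0; 0]; [:: 0; 1; 0; 0; 0; 2; 0; 0; 0; 0; 0; 0]; [:: 1; 0; 0; 0; 2; 0; 0; 0; 0; 0; 0; 0]; [:: 0; 0; 0; 1; 0; 1; 0; 1; 0; 0; 0; 0]; [:: 0; 0; 1; 0; 1; 0; 1; 0; 0; 0; 0; 0]; [:: 0; 0; 0; 0; 0; 1; 0; 1; 0; 1; 0; 0]; [:: 0; 0; 0; 0; 1; 0; 1; 0; 1; 0; 0; 0]; [:: 0; 0; 0; 0; 0; 0; 0; 2; 0; 0; 0; 1]; [:: 0; 0; 0; 0; 0; 0; 2; 0; 0; 0; 1; 0]; [:: 0; 0; 0; 0; 0; 0; 0; 0; 0; 3; 0; 0]; [:: 0; 0; 0; 0; 0; 0; 0; 0; 3; 0; 0; 0]].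
Definition rDtab : seq (seq nat) := [:: [:: 0; 3; 3; 3; 4; 4; 4; 4; 4; 4; 5; 7; 7; 5; 7; 5; 5; 7; 7; 5; 5; 7; 2; 6; 8; 6; 6; 8; 6; 2; 8; 6; 2; 6; 1; 9; 11; 9; 9; 10]; [:: 3; 0; 4; 4; 3; 3; 7; 5; 5; 7; 4; 4; 4; 4; 8; 6; 2; 6; 6; 2; 6; 8; 5; 7; 7; 5; 5; 7; 7; 5; 11; 9; 1; 9; 2; 6; 8; 6; 10; 9]; [:: 3; 4; 0; 4; 5; 7; 3; 3; 7; 5; 2; 6; 8; 6; 4; 4; 4; 4; 8; 6; 2; 6; 1; 5; 7; 9; 7; 11; 9; 5; 7; 7; 5; 5; 2; 6; 8; 10; 6; 9]; [:: 3; 4; 4; 0; 7; 5; 5; 7; 3; 3; 6; 8; 6; 2; 6; 2; 6; 8; 4; 4; 4; 4; 5; 9; 11; 7; 9; 7; 5; 1; 7; 5; 5; 7; 2; 10; 8; 6; 6; 9]; [:: 4; 3; 5; 7; 0; 4; 6; 2; 6; 8; 3; 3; 5; 7; 7; 9; 1; 5; 9; 5; 7; 11; 4; 4; 4; 4; 2; 6; 8; 6; 8; 10; 2; 6; 5; 5; 7; 7; 9; 6]; [:: 4; 3; 7; 5; 4; 0; 8; 6; 2; 6; 7; 5; 3; 3; 11; 7; 5; 9; 5; 1; 9; 7; 6; 8; 6; 2; 4; 4; 4; 4; 8; 6; 2; 10; 5; 7; 7; 5; 9; 6]; [:: 4; 7; 3; 5; 6; 8; 0; 4; 6; 2; 5;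 9; 11; 7; 3; 3; 7; 5; 7; 9; 1; 5; 2; 4; 6; 10; 8; 8; 6; 4; 4; 4; 6; 2; 5; 7; 7; 9; 5; 6]; [:: 4; 5; 3; 7; 2; 6; 4; 0; 8; 6; 1; 5; 7; 9; 5; 7; 3; 3; 11; 7; 5; 9; 2; 2; 4; 6; 4; 8; 10; 6; 6; 8; 4; 4; 5; 5; 7; 9; 7; 6]; [:: 4; 5; 7; 3; 6; 2; 6; 8; 0; 4; 9; 7; 5; 1; 9; 5; 7; 11; 3; 3; 7; 5; 6; 10; 8; 4; 6; 4; 2; 2; 6; 4; 4; 8; 5; 9; 7; 5; 7; 6]; [:: 4; 7; 5; 3; 8; 6; 2; 6; 4; 0; 7; 11; 9; 5; 5; 1; 9; 7; 5; 7; 3; 3; 4; 6; 8; 8; 10; 6; 4; 2; 4; 2; 6; 4; 5; 9; 7; 7; 5; 6]; [:: 5; 4; 2; 6; 3; 7; 5; 1; 9; 7; 0; 4; 6; 8; 4; 6; 2; 2; 10; 6; 4; 8; 3; 3; 5; 7; 5; 9; 11; 7; 7; 9; 5; 5; 4; 4; 6; 8; 6; 7]; [:: 7; 4; 6; 8; 3; 5; 9; 5; 7; 11; 4; 0; 2; 6; 6; 10; 2; 4; 6; 4; 8; 8; 7; 5; 3; 3; 1; 5; 7; 9; 7; 9; 5; 7; 6; 2; 4; 4; 6; 5]; [:: 7; 4; 8; 6; 5; 3; 11; 7; 5; 9; 6; 2; 0; 4; 8; 8; 4; 6; 4; 2; 10; 6; 9; 7; 5; 1; 3; 3; 5; 7;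 7; 7; 5; 9; 6; 4; 4; 2; 6; 5]; [:: 5; 4; 6; 2; 7; 3; 7; 9; 1; 5; 8; 6; 4; 0; 8; 4; 6; 10; 2; 2; 6; 4; 7; 11; 9; 5; 7; 5; 3; 3; 7; 5; 5; 9; 4; 8; 6; 4; 6; 7]; [:: 7; 8; 4; 6; 7; 11; 3; 5; 9; 5; 4; 6; 8; 8; 0; 4; 6; 2; 6; 10; 2; 4; 5; 3; 5; 9; 7; 7; 7; 7; 3; 5; 9; 1; 6; 4; 4; 6; 2; 5]; [:: 5; 6; 4; 2; 9; 7; 3; 7; 5; 1; 6; 10; 8; 4; 4; 0; 8; 6; 4; 6; 2; 2; 5; 7; 9; 9; 11; 7; 5; 3; 5; 3; 7; 5; 4; 8; 6; 6; 4; 7]; [:: 5; 2; 4; 6; 1; 5; 7; 3; 7; 9; 2; 2; 4; 6; 6; 8; 0; 4; 8; 4; 6; 10; 5; 5; 5; 5; 3; 7; 9; 7; 9; 11; 3; 7; 4; 4; 6; 6; 8; 7]; [:: 7; 6; 4; 8; 5; 9; 5; 3; 11; 7; 2; 4; 6; 10; 2; 6; 4; 0; 8; 8; 4; 6; 5; 1; 3; 7; 5; 7; 9; 9; 5; 7; 7; 3; 6; 2; 4; 6; 4; 5]; [:: 7; 6; 8; 4; 9; 5; 7; 11; 3; 5; 10; 6; 4; 2; 6; 4; 8; 8; 0; 4; 6; 2; 9; 9; 7; 5; 7; 3; 1; 5; 5; 3; 7; 7; 6; 6; 4; 2; 4; 5]; [:: 5; 2; 6; 4; 5; 1; 9; 7;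 3; 7; 6; 4; 2; 2; 10; 6; 4; 8; 4; 0; 8; 6; 7; 9; 7; 3; 5; 5; 5; 5; 9; 7; 3; 11; 4; 6; 6; 4; 8; 7]; [:: 5; 6; 2; 4; 7; 9; 1; 5; 7; 3; 4; 8; 10; 6; 2; 2; 6; 4; 6; 8; 0; 4; 3; 5; 7; 11; 9; 9; 7; 5; 5; 5; 7; 3; 4; 6; 6; 8; 4; 7]; [:: 7; 8; 6; 4; 11; 7; 5; 9; 5; 3; 8; 8; 6; 4; 4; 2; 10; 6; 2; 6; 4; 0; 7; 7; 7; 7; 9; 5; 3; 5; 3; 1; 9; 5; 6; 6; 4; 4; 2; 5]; [:: 2; 5; 1; 5; 4; 6; 2; 2; 6; 4; 3; 7; 9; 7; 5; 5; 5; 5; 9; 7; 3; 7; 0; 4; 6; 8; 6; 10; 8; 4; 6; 6; 4; 4; 3; 7; 9; 11; 7; 8]; [:: 6; 7; 5; 9; 4; 8; 4; 2; 10; 6; 3; 5; 7; 11; 3; 7; 5; 1; 9; 9; 5; 7; 4; 0; 2; 6; 4; 6; 8; 8; 4; 6; 6; 2; 7; 3; 5; 7; 5; 4]; [:: 8; 7; 7; 11; 4; 6; 6; 4; 8; 8; 5; 3; 5; 9; 5; 9; 5; 3; 7; 7; 7; 7; 6; 2; 0; 4; 2; 4; 6; 10; 4; 6; 6; 4; 9; 1; 3; 5; 5; 2]; [:: 6; 5; 9; 7; 4; 2; 10; 6; 4; 8; 7; 3; 1; 5; 9; 9; 5; 7; 5; 3; 11; 7; 8; 6; 4; 0; 2;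 2; 4; 6; 6; 6; 4; 8; 7; 5; 5; 3; 7; 4]; [:: 6; 5; 7; 9; 2; 4; 8; 4; 6; 10; 5; 1; 3; 7; 7; 11; 3; 5; 7; 5; 9; 9; 6; 4; 2; 2; 0; 4; 6; 8; 6; 8; 4; 6; 7; 3; 5; 5; 7; 4]; [:: 8; 7; 11; 7; 6; 4; 8; 8; 4; 6; 9; 5; 3; 5; 7; 7; 7; 7; 3; 5; 9; 5; 10; 6; 4; 2; 4; 0; 2; 6; 4; 4; 6; 6; 9; 5; 3; 1; 5; 2]; [:: 6; 7; 9; 5; 8; 4; 6; 10; 2; 4; 11; 7; 5; 3; 7; 5; 9; 9; 1; 5; 7; 3; 8; 8; 6; 4; 6; 2; 0; 4; 4; 2; 6; 6; 7; 7; 5; 3; 5; 4]; [:: 2; 5; 5; 1; 6; 4; 4; 6; 2; 2; 7; 9; 7; 3; 7; 3; 7; 9; 5; 5; 5; 5; 4; 8; 10; 6; 8; 6; 4; 0; 6; 4; 4; 6; 3; 11; 9; 7; 7; 8]; [:: 8; 11; 7; 7; 8; 8; 4; 6; 6; 4; 7; 7; 7; 7; 3; 5; 9; 5; 5; 9; 5; 3; 6; 4; 4; 6; 6; 4; 4; 6; 0; 2; 10; 2; 9; 5; 3; 5; 1; 2]; [:: 6; 9; 7; 5; 10; 6; 4; 8; 4; 2; 9; 9; 7; 5; 5; 3; 11; 7; 3; 7; 5; 1; 6; 6; 6; 6; 8; 4; 2; 4; 2; 0; 8; 4; 7; 7; 5; 5; 3; 4]; [:: 2; 1; 5; 5; 2;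 2; 6; 4; 4; 6; 5; 5; 5; 5; 9; 7; 3; 7; 7; 3; 7; 9; 4; 6; 6; 4; 4; 6; 6; 4; 10; 8; 0; 8; 3; 7; 9; 7; 11; 8]; [:: 6; 9; 5; 7; 6; 10; 2; 4; 8; 4; 5; 7; 9; 9; 1; 5; 7; 3; 7; 11; 3; 5; 4; 2; 4; 8; 6; 6; 6; 6; 2; 4; 8; 0; 7; 5; 5; 7; 3; 4]; [:: 1; 2; 2; 2; 5; 5; 5; 5; 5; 5; 4; 6; 6; 4; 6; 4; 4; 6; 6; 4; 4; 6; 3; 7; 9; 7; 7; 9; 7; 3; 9; 7; 3; 7; 0; 8; 10; 8; 8; 11]; [:: 9; 6; 6; 10; 5; 7; 7; 5; 9; 9; 4; 2; 4; 8; 4; 8; 4; 2; 6; 6; 6; 6; 7; 3; 1; 5; 3; 5; 7; 11; 5; 7; 7; 5; 8; 0; 2; 4; 4; 3]; [:: 11; 8; 8; 8; 7; 7; 7; 7; 7; 7; 6; 4; 4; 6; 4; 6; 6; 4; 4; 6; 6; 4; 9; 5; 3; 5; 5; 3; 5; 9; 3; 5; 9; 5; 10; 2; 0; 2; 2; 1]; [:: 9; 6; 10; 6; 7; 5; 9; 9; 5; 7; 8; 4; 2; 4; 6; 6; 6; 6; 2; 4; 8; 4; 11; 7; 5; 3; 5; 1; 3; 7; 5; 5; 7; 7; 8; 4; 2; 0; 4; 3]; [:: 9; 10; 6; 6; 9; 9; 5; 7; 7; 5; 6; 6; 6; 6; 2; 4; 8; 4; 4; 8; 4; 2; 7; 5;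 5; 7; 7; 5; 5; 7; 1; 3; 11; 3; 8; 4; 2; 4; 0; 3]; [:: 10; 9; 9; 9; 6; 6; 6; 6; 6; 6; 7; 5; 5; 7; 5; 7; 7; 5; 5; 7; 7; 5; 8; 4; 2; 4; 4; 2; 4; 8; 2; 4; 8; 4; 11; 3; 1; 3; 3; 0]].
Definition distab : seq (seq nat) := [:: [:: 0; 1; 2; 3; 4; 5; 4; 3; 2; 1; 1; 2; 2; 3; 3; 4; 3; 3; 2; 2]; [:: 1; 0; 1; 2; 3; 4; 5; 4; 3; 2; 2; 1; 2; 2; 3; 3; 4; 3; 3; 2]; [:: 2; 1; 0; 1; 2; 3; 4; 5; 4; 3; 2; 2; 1; 2; 2; 3; 3; 4; 3; 3]; [:: 3; 2; 1; 0; 1; 2; 3; 4; 5; 4; 3; 2; 2; 1; 2; 2; 3; 3; 4; 3]; [:: 4; 3; 2; 1; 0; 1; 2; 3; 4; 5; 3; 3; 2; 2; 1; 2; 2; 3; 3; 4]; [:: 5; 4; 3; 2; 1; 0; 1; 2; 3; 4; 4; 3; 3; 2; 2; 1; 2; 2; 3; 3]; [:: 4; 5; 4; 3; 2; 1; 0; 1; 2; 3; 3; 4; 3; 3; 2; 2; 1; 2; 2; 3]; [:: 3; 4; 5; 4; 3; 2; 1; 0; 1; 2; 3; 3; 4; 3; 3; 2; 2; 1; 2; 2]; [:: 2; 3; 4; 5; 4; 3; 2; 1; 0; 1; 2; 3; 3; 4; 3; 3; 2; 2; 1; 2]; [:: 1; 2; 3; 4; 5; 4; 3; 2; 1; 0;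 2; 2; 3; 3; 4; 3; 3; 2; 2; 1]; [:: 1; 2; 2; 3; 3; 4; 3; 3; 2; 2; 0; 3; 1; 4; 2; 5; 2; 4; 1; 3]; [:: 2; 1; 2; 2; 3; 3; 4; 3; 3; 2; 3; 0; 3; 1; 4; 2; 5; 2; 4; 1]; [:: 2; 2; 1; 2; 2; 3; 3; 4; 3; 3; 1; 3; 0; 3; 1; 4; 2; 5; 2; 4]; [:: 3; 2; 2; 1; 2; 2; 3; 3; 4; 3; 4; 1; 3; 0; 3; 1; 4; 2; 5; 2]; [:: 3; 3; 2; 2; 1; 2; 2; 3; 3; 4; 2; 4; 1; 3; 0; 3; 1; 4; 2; 5]; [:: 4; 3; 3; 2; 2; 1; 2; 2; 3; 3; 5; 2; 4; 1; 3; 0; 3; 1; 4; 2]; [:: 3; 4; 3; 3; 2; 2; 1; 2; 2; 3; 2; 5; 2; 4; 1; 3; 0; 3; 1; 4]; [:: 3; 3; 4; 3; 3; 2; 2; 1; 2; 2; 4; 2; 5; 2; 4; 1; 3; 0; 3; 1]; [:: 2; 3; 3; 4; 3; 3; 2; 2; 1; 2; 1; 4; 2; 5; 2; 4; 1; 3; 0; 3]; [:: 2; 2; 3; 3; 4; 3; 3; 2; 2; 1; 3; 1; 4; 2; 5; 2; 4; 1; 3; 0]].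
Definition vtab : seq nat := [:: 1; 1; 3; 3; 6; 6; 6; 6; 3; 3; 1; 1].

Definition Ptab (h j : nat) : nat := nth 0 (nth [::] ptab h) j.
Definition Vtab (h : nat) : nat := nth 0 vtab h.
Definition rD (u v : nat) : nat := nth 0 (nth [::] rDtab u) v.
Definition defn (v : nat) := nth (0,0,0) defl v.

Definition state := seq (seq (seq nat)).
Definition getC (C : state) u v := nth [::] (nth [::] C u) v.
Definition upd (C : state) u v s : state := set_nth [::] C u (set_nth [::] (nth [::] C u) v s).
Definition setsym (C : state) u v (S : seq nat) : state :=
  let s := [seq j <- getC C u v | j \in S] in upd (upd C u v s) v u s.

Definition feas (h j1 j2 j3 : nat) : bool :=
  all (fun j => count_mem j [:: j1; j2; j3] == Ptab h j) allJ.

Definition nN := 40.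

Definition step_ok (C : state) (st : step) : option state :=
  match st with
  | SF v => let: (p, rf, jc) := defn v in
      if [&& v < nN, 4 <= v, p < v, rf < v, jc < 12 & 0 < Ptab (head 0 (getC C p rf)) jc]
         && (size (getC C p rf) == 1)
      then Some (setsym (setsym C p v [:: 3]) v rf [:: jc]) else None
  | SC a b c1 c2 c3 =>
      if [&& a < nN, b < nN, c1 < nN, c2 < nN, c3 < nN,
             size (getC C a b) == 1,
             getC C b c1 == [:: 3], getC C b c2 == [:: 3], getC C b c3 == [:: 3],
             0 \notin getC C c1 c2, 0 \notin getC C c1 c3 & 0 \notin getC C c2 c3]
      then
        let h := head 0 (getC C a b) in
        let s1 := getC C a c1 in let s2 := getC C a c2 in let s3 := getC C a c3 in
        let f1 := [seq x <- s1 | has (fun y => has (fun z => feas h x y z) s3) s2] in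
        let f2 := [seq y <- s2 | has (fun x => has (fun z => feas h x y z) s3) s1] in
        let f3 := [seq z <- s3 | has (fun x => has (fun y => feas h x y z) s2) s1] in
        Some (setsym (setsym (setsym C a c1 f1) a c2 f2) a c3 f3)
      else None
  | SD c d a =>
      if [&& c < nN, d < nN, a < nN & ~~ has (fun j => j \in getC C a d) (getC C a c)]
      then Some (setsym C c d [seq j <- allJ | j != 0]) else None
  end.

Fixpoint run (C : state) (l : seq step) : option state :=
  if l is st :: l' then (if step_ok C st is Some C' then run C' l' else None) else Some C.

Definition C0 : state :=
  let C := [seq [seq (if u == v then [:: 0] else allJ) | v <- iota 0 nN] | u <- iota 0 nN] in
  let C := setsym (setsym (setsym C 0 1 [:: 3]) 0 2 [:: 3]) 0 3 [:: 3] in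
  let nz := [seq j <- allJ | j != 0] in
  setsym (setsym (setsym C 1 2 nz) 1 3 nz) 2 3 nz.

Definition final_ok (C : state) : bool :=
  all (fun u => all (fun v => getC C u v == [:: rD u v]) (iota 0 nN)) (iota 0 nN).

Definition engine_ok : bool :=
  if run C0 cert is Some C then final_ok C else false.

Lemma engine_okT : engine_ok = true.
Proof. vm_compute. reflexivity. Qed.
Definition nmlist : seq Dvert := [:: ((@Ordinal 10 0 erefl, false), false); ((@Ordinal 10 0 erefl, true), true); ((@Ordinal 10 1 erefl, false), true); ((@Ordinal 10 9 erefl, false), true); ((@Ordinal 10 2 erefl, true), false); ((@Ordinal 10 8 erefl, true), false); ((@Ordinal 10 1 erefl, true), false); ((@Ordinal 10 2 erefl, false), false); ((@Ordinal 10 8 erefl, false), false); ((@Ordinal 10 9 erefl, true), false); ((@Ordinal 10 2 erefl, false), true); ((@Ordinal 10 4 erefl, true), true); ((@Ordinal 10 6 erefl, true), true); ((@Ordinal 10 8 erefl, false), true); ((@Ordinal 10 3 erefl, true), true); ((@Ordinal 10 9 erefl, true), true); ((@Ordinal 10 2 erefl, true), true); ((@Ordinal 10 3 erefl, false), true); ((@Ordinal 10 7 erefl, false), true); ((@Ordinal 10 8 erefl, true), true); ((@Ordinal 10 1 erefl, true), true); ((@Ordinal 10 7 erefl, true), true); ((@Ordinal 10 1 erefl, false), false); ((@Ordinal 10 3 erefl, false), false); ((@Ordinal 10 4 erefl, false), false); ((@Ordinal 10 6 erefl, true), false); ((@Ordinal 10 4 erefl, true), false); ((@Ordinal 10 6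 erefl, false), false); ((@Ordinal 10 7 erefl, false), false); ((@Ordinal 10 9 erefl, false), false); ((@Ordinal 10 5 erefl, true), false); ((@Ordinal 10 7 erefl, true), false); ((@Ordinal 10 0 erefl, true), false); ((@Ordinal 10 3 erefl, true), false); ((@Ordinal 10 0 erefl, false), true); ((@Ordinal 10 4 erefl, false), true); ((@Ordinal 10 5 erefl, false), true); ((@Ordinal 10 6 erefl, false), true); ((@Ordinal 10 5 erefl, true), true); ((@Ordinal 10 5 erefl, false), false)].
Definition vl20 : seq ('I_10 * bool) := [:: (@Ordinal 10 0 erefl, false); (@Ordinal 10 1 erefl, false); (@Ordinal 10 2 erefl, false); (@Ordinal 10 3 erefl, false); (@Ordinal 10 4 erefl, false); (@Ordinal 10 5 erefl, false); (@Ordinal 10 6 erefl, false); (@Ordinal 10 7 erefl, false); (@Ordinal 10 8 erefl, false); (@Ordinal 10 9 erefl, false); (@Ordinal 10 0 erefl, true); (@Ordinal 10 1 erefl, true); (@Ordinal 10 2 erefl, true); (@Ordinal 10 3 erefl, true); (@Ordinal 10 4 erefl, true); (@Ordinal 10 5 erefl, true); (@Ordinal 10 6 erefl, true); (@Ordinal 10 7 erefl, true); (@Ordinal 10 8 erefl, true); (@Ordinal 10 9 erefl, true)].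
Definition vl40 : seq Dvert := [seq (v, a) | a <- [:: false; true], v <- vl20].
Definition vcode (x : 'I_10 * bool) : nat := (x.1 + 10 * x.2)%N.
Definition distT (x y : 'I_10 * bool) : nat := nth 0 (nth [::] distab (vcode x)) (vcode y).
Definition dcode (u v : Dvert) : nat := (2 * distT u.1 v.1 + (u.2 != v.2))%N.
Definition nm (u : nat) : Dvert := nth ((@Ordinal 10 0 erefl, false), false) nmlist u.

Definition nextB (B : seq ('I_10 * bool)) : seq ('I_10 * bool) :=
  [seq z <- vl20 | (z \in B) || has (fun w => dodeca_adj w z) B].
Fixpoint ballsAux (n : nat) (B : seq ('I_10 * bool)) : seq (seq ('I_10 * bool)) :=
  if n is n'.+1 then B :: ballsAux n' (nextB B) else [::].
Definition chk1 : bool := all (fun x => let bs := ballsAux 20 [:: x] in all (fun y =>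
   sumn [seq ((y \notin B) : nat) | B <- bs] == distT x y) vl20) vl20.
Lemma chk1T : chk1. Proof. vm_compute. reflexivity. Qed.
Definition chk2 : bool := all (fun u => all (fun v => all (fun j =>
  count (fun z => (dcode u z == 3) && (dcode z v == j)) vl40 == Ptab (dcode u v) j) allJ) vl40) vl40.
Lemma chk2T : chk2. Proof. vm_compute. reflexivity. Qed.
Definition chk3 : bool := all (fun u => all (fun h =>
  count (fun z => (dcode u z == h) && (dcode z u == h)) vl40 == Vtab h) allJ) vl40.
Lemma chk3T : chk3. Proof. vm_compute. reflexivity. Qed.
Definition chk4 : bool := all (fun u => all (fun v => dcode (nm u) (nm v) == rD u v) (iota 0 40)) (iota 0 40).
Lemma chk4T : chk4. Proof. vm_compute. reflexivity. Qed.
Definition chk5 : bool := [&& uniq nmlist, all (fun w => w \in nmlist) vl40 & size nmlist == 40].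
Lemma chk5T : chk5. Proof. vm_compute. reflexivity. Qed.
Definition chk6 : bool := all (fun h => has (fun u => has (fun v => dcode u v == h) vl40) vl40) allJ.
Lemma chk6T : chk6. Proof. vm_compute. reflexivity. Qed.
Definition chk7 : bool := all (fun u => all (fun v => (dcode u v == 0) == (u == v)) vl40) vl40.
Lemma chk7T : chk7. Proof. vm_compute. reflexivity. Qed.
Definition chk8 : bool := (sumn vtab == 40) && all (fun u => all (fun v => dcode u v < 12) vl40) vl40
  && all (fun x => all (fun y => distT x y < 6) vl20) vl20.
Lemma chk8T : chk8. Proof. vm_compute. reflexivity. Qed.

Lemma card_list (T : finType) (s : seq T) (P : pred T) :
  uniq s -> (forall x, x \in s) -> #|[set z | P z]| = count P s.
Proof.
move=> us alls; rewrite -size_filter.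
have -> : #|[set z | P z]| = #|filter P s|.
  by apply: eq_card => z; rewrite inE mem_filter alls andbT.
by apply/card_uniqP; rewrite filter_uniq.
Qed.

Lemma vl20_all (x : 'I_10 * bool) : x \in vl20.
Proof.
case: x => [[i Hi] b].
by move: i Hi; do 10!(case; first by move=> Hi; case: b; vm_compute).
Qed.

Lemma vl40_all (w : Dvert) : w \in vl40.
Proof.
case: w => v a; rewrite /vl40; apply/allpairsPdep; exists a, v.
by split=> //; [case: a | exact: vl20_all].
Qed.

Lemma vl40_uniq : uniq vl40. Proof. by vm_compute. Qed.
Lemma vl20_uniq : uniq vl20. Proof. by vm_compute. Qed.

Lemma ballE (k : nat) (x y : 'I_10 * bool) :
  (y \in ball dodeca_adj k x) = (y \in iter k nextB [:: x]).
Proof.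
elim: k y => [|k IH] y /=; first by rewrite !inE.
rewrite /nextB mem_filter vl20_all andbT in_setU IH; congr (_ || _).
rewrite inE; apply/existsP/hasP => [[w /andP [Hw Hadj]]|[w Hw Hadj]].
  by exists w => //; rewrite -IH.
by exists w; rewrite IH Hw.
Qed.

Lemma ballsAux_nth n B k : k < n -> nth [::] (ballsAux n B) k = iter k nextB B.
Proof.
elim: n B k => [|n IH] B [|k] //= Hk.
by rewrite IH // -iterSr.
Qed.

Lemma size_ballsAux n B : size (ballsAux n B) = n.
Proof. by elim: n B => //= n IH B; rewrite IH. Qed.

Lemma card_V20 : #|{: 'I_10 * bool}| = 20.
Proof. by rewrite card_prod card_ord card_bool. Qed.

Lemma gdistE (x y : 'I_10 * bool) : gdist dodeca_adj x y = distT x y.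
Proof.
have := chk1T; rewrite /chk1 => /allP /(_ x (vl20_all x)) /allP /(_ y (vl20_all y)) /eqP <-.
rewrite /gdist.
set bs := ballsAux 20 [:: x].
have -> : bs = mkseq (nth [::] bs) 20 by rewrite -{1}(mkseq_nth [::] bs) size_ballsAux.
rewrite sumnE /mkseq -map_comp big_map.
rewrite card_V20 -(big_mkord xpredT (fun k => (y \notin ball dodeca_adj k x) : nat)).
rewrite /index_iota subn0; apply: eq_big_seq => k; rewrite mem_iota add0n => Hk /=.
by rewrite ballsAux_nth // ballE.
Qed.

Lemma code_lt (h : J) : code h < 12.
Proof. by case: h => [[i Hi] [e He]]; rewrite /code /=; lia. Qed.

Lemma half_lemma i e : e < 2 -> (2 * i + e)./2 = i /\ odd (2 * i + e) = (e == 1%N).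
Proof.
case: e => [|[|]] // _.
  by rewrite addn0 mul2n half_double odd_double.
have -> : (2 * i + 1 = true + i.*2)%N by rewrite mul2n addnC.
by rewrite half_bit_double oddD odd_double.
Qed.

Lemma jj_code (h : J) : jj (code h) = h.
Proof.
case: h => [[i Hi] [e He]]; rewrite /jj /code /=.
have [E1 E2] := half_lemma i He.
rewrite E1 E2; congr (_, _); apply: val_inj; rewrite /= inordK //.
by case: e He {E1 E2} => [|[|]].
by case: (e == 1%N).
Qed.

Lemma code_jj n : n < 12 -> code (jj n) = n.
Proof.
by move: n; do 12!(case=> [_|]; first by rewrite /code /jj /= !inordK).
Qed.

Lemma jj_inj m n : m < 12 -> n < 12 -> (jj m == jj n) = (m == n).
Proof.
move=> Hm Hn; apply/eqP/eqP => [E|->] //.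
by rewrite -(code_jj Hm) -(code_jj Hn) E.
Qed.

Lemma code_inj (h h' : J) : (code h == code h') = (h == h').
Proof.
apply/eqP/eqP => [E|->] //.
by rewrite -(jj_code h) -(jj_code h') E.
Qed.

Lemma dcode_lt u v : dcode u v < 12.
Proof. by have := chk8T; rewrite /chk8 => /andP [/andP [_ /allP /(_ u (vl40_all u)) /allP /(_ v (vl40_all v))]]. Qed.

Lemma D_relE (u v : Dvert) : D_rel u v = jj (dcode u v).
Proof.
rewrite /D_rel /prod_rel /dodeca_rel gdistE /dcode /jj.
have Hd : distT u.1 v.1 < 6.
  by have := chk8T; rewrite /chk8 => /andP [_ /allP /(_ _ (vl20_all u.1)) /allP /(_ _ (vl20_all v.1))].
set d := distT u.1 v.1; set e := (u.2 != v.2).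
have He : (e : nat) < 2 by case: (e).
have [E1 E2] := half_lemma d He.
rewrite E1 E2; congr (_, _).
rewrite /two_rel; apply: val_inj; rewrite /= inordK; last by case: (_ == _).
by rewrite /e; case: (u.2 == v.2).
Qed.

Lemma code_R1 : code D_R1 = 3.
Proof. by rewrite /code /= inordK. Qed.
Lemma code_R0 : code D_R0 = 0.
Proof. by []. Qed.
Lemma R1_jj : D_R1 = jj 3.
Proof. by apply/eqP; rewrite -code_inj code_jj // code_R1. Qed.
Lemma R0_jj : D_R0 = jj 0.
Proof. by apply/eqP; rewrite -code_inj code_jj // code_R0. Qed.

Lemma D_P (h j : J) : pnum D_rel h D_R1 j = Ptab (code h) (code j).
Proof.
rewrite /pnum; case: pickP => [[u v] /= /eqP Huv|H].
  rewrite (card_list _ vl40_uniq vl40_all).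
  have -> : code h = dcode u v by rewrite -Huv D_relE code_jj // dcode_lt.
  have := chk2T; rewrite /chk2 => /allP /(_ u (vl40_all u)) /allP /(_ v (vl40_all v)) /allP.
  move=> /(_ (code j)); rewrite mem_iota add0n code_lt => /(_ isT) /eqP <-.
  apply: eq_count => z; rewrite !D_relE.
  rewrite R1_jj.
  rewrite jj_inj ?dcode_lt //.
  by rewrite -(jj_code j) jj_inj ?dcode_lt ?code_lt // code_jj ?code_lt.
exfalso.
have := chk6T; rewrite /chk6 => /allP /(_ (code h)); rewrite mem_iota add0n code_lt => /(_ isT).
move=> /hasP [u _ /hasP [v _ /eqP E]].
by have := H (u, v); rewrite /= D_relE E jj_code eqxx.
Qed.

Lemma dcode0 u v : (dcode u v == 0) = (u == v).
Proof. by have := chk7T; rewrite /chk7 => /allP /(_ u (vl40_all u)) /allP /(_ v (vl40_all v)) /eqP. Qed.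

Lemma D_V (h : J) : valency D_rel D_R0 h = Vtab (code h).
Proof.
rewrite /valency /pnum; case: pickP => [[u v] /= /eqP Huv|H].
  have Euv : u = v by apply/eqP; rewrite -dcode0 -(jj_inj (dcode_lt _ _)) // -D_relE Huv R0_jj.
  subst v.
  rewrite (card_list _ vl40_uniq vl40_all).
  have := chk3T; rewrite /chk3 => /allP /(_ u (vl40_all u)) /allP.
  move=> /(_ (code h)); rewrite mem_iota add0n code_lt => /(_ isT) /eqP <-.
  apply: eq_count => z; rewrite !D_relE.
  by rewrite -(jj_code h) !jj_inj ?dcode_lt ?code_lt // code_jj ?code_lt.
exfalso.
have := H (nm 0, nm 0); rewrite /= D_relE.
have /eqP -> : dcode (nm 0) (nm 0) == 0 by rewrite dcode0.
by rewrite R0_jj eqxx.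
Qed.

Lemma D_names u v : u < 40 -> v < 40 -> D_rel (nm u) (nm v) = jj (rD u v).
Proof.
move=> Hu Hv; rewrite D_relE; congr jj.
have := chk4T; rewrite /chk4 => /allP /(_ u); rewrite mem_iota add0n => /(_ Hu) /allP /(_ v).
by rewrite mem_iota add0n => /(_ Hv) /eqP.
Qed.

Lemma nm_uniq : uniq nmlist.
Proof. by have := chk5T; rewrite /chk5 => /and3P []. Qed.
Lemma nm_size : size nmlist = 40.
Proof. by have := chk5T; rewrite /chk5 => /and3P [_ _ /eqP]. Qed.
Lemma nm_all w : w \in nmlist.
Proof. by have := chk5T; rewrite /chk5 => /and3P [_ /allP /(_ w (vl40_all w)) H _]. Qed.

Lemma vtab_sum : sumn vtab = 40.
Proof. by have := chk8T; rewrite /chk8 => /andP [/andP [/eqP]]. Qed.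

Definition nbrs (X : finType) (R : X -> X -> nat) (x0 : X) : seq X :=
  enum [set z | R x0 z == 3].

Definition gnew (X : finType) (R : X -> X -> nat) (x0 : X) (s : seq X) (v : nat) : X :=
  if v == 0 then x0 else if v < 4 then nth x0 (nbrs R x0) v.-1
  else let: (p, rf, jc) := defn v in
       odflt x0 [pick z | (R (nth x0 s p) z == 3) && (R z (nth x0 s rf) == jc)].

Fixpoint build (X : finType) (R : X -> X -> nat) (x0 : X) (n : nat) : seq X :=
  if n is n'.+1 then rcons (build R x0 n') (gnew R x0 (build R x0 n') n') else [::].

Definition gg (X : finType) (R : X -> X -> nat) (x0 : X) (v : nat) : X :=
  nth x0 (build R x0 40) v.

Lemma size_build X R x0 n : size (@build X R x0 n) = n.
Proof. by elim: n => //= n IH; rewrite size_rcons IH. Qed.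

Lemma nth_build X R x0 n v : v < n -> nth x0 (@build X R x0 n) v = gnew R x0 (build R x0 v) v.
Proof.
elim: n => // n IH Hv /=; rewrite nth_rcons size_build.
rewrite ltnS leq_eqVlt in Hv; case/orP: Hv => [/eqP ->|Hlt].
  by rewrite ltnn eqxx.
by rewrite Hlt IH.
Qed.

Lemma gg_def X R x0 v : v < 40 -> @gg X R x0 v = gnew R x0 (build R x0 v) v.
Proof. exact: nth_build. Qed.

Lemma build_gg X R x0 v p : p < v -> v <= 40 -> nth x0 (@build X R x0 v) p = gg R x0 p.
Proof. by move=> Hp Hv; rewrite /gg !nth_build //; apply: leq_trans Hv. Qed.

Lemma getC_upd C u v s u' v' :
  getC (upd C u v s) u' v' = if (u' == u) && (v' == v) then s else getC C u' v'.
Proof.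
rewrite /getC /upd !nth_set_nth /=.
case: (u' == u) /eqP => [->|] //=; by rewrite nth_set_nth /=; case: (v' == v).
Qed.

Definition Inv (X : finType) (R : X -> X -> nat) (g : nat -> X) (C : state) :=
  forall u v, u < nN -> v < nN -> R (g u) (g v) \in getC C u v.

Lemma setsym_sound X R g C u v S :
  (forall x y, R x y = R y x) ->
  @Inv X R g C -> R (g u) (g v) \in S -> Inv R g (setsym C u v S).
Proof.
move=> Hs I HS u' v' Hu' Hv'; rewrite /setsym !getC_upd.
case: andP => [[/eqP E1 /eqP E2]|_]; first by subst; rewrite mem_filter Hs HS I.
case: andP => [[/eqP E1 /eqP E2]|_]; first by subst; rewrite mem_filter HS I.
exact: I.
Qed.

Definition hyps (X : finType) (R : X -> X -> nat) :=
  [/\ (forall x y, (R x y == 0) = (x == y)), (forall x y, R x y = R y x),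
      (forall x y j, j < 12 -> #|[set z | (R x z == 3) && (R z y == j)]| = Ptab (R x y) j)
    & (forall x y, R x y < 12)].

Lemma card_nbr X R (H : @hyps X R) y : #|[set z | R y z == 3]| = 3.
Proof.
case: H => H0 Hs HP _.
transitivity #|[set z | (R y z == 3) && (R z y == 3)]|.
  by apply: eq_card => z; rewrite !inE (Hs z y) andbb.
by rewrite HP //; have /eqP -> : R y y == 0 by rewrite H0.
Qed.

Lemma card_seqP (T : finType) (s : seq T) (P : pred T) :
  uniq s -> #|[set z | (z \in s) && P z]| = count P s.
Proof.
move=> us; rewrite -size_filter.
have -> : #|[set z | (z \in s) && P z]| = #|filter P s|.
  by apply: eq_card => z; rewrite inE mem_filter andbC.
by apply/card_uniqP; rewrite filter_uniq.
Qed.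

Lemma count3 X R (H : @hyps X R) x y z1 z2 z3 j : j < 12 ->
  R y z1 = 3 -> R y z2 = 3 -> R y z3 = 3 ->
  z1 != z2 -> z1 != z3 -> z2 != z3 ->
  count_mem j [:: R x z1; R x z2; R x z3] = Ptab (R x y) j.
Proof.
move=> Hj E1 E2 E3 N12 N13 N23.
have [H0 Hs HP Hlt] := H.
have us : uniq [:: z1; z2; z3] by rewrite /= !inE negb_or N12 N13 N23.
have EN : [set z | z \in [:: z1; z2; z3]] = [set z | R y z == 3].
  have cs : #|[set z | z \in [:: z1; z2; z3]]| = 3.
    rewrite -[RHS](card_seqP xpredT us); apply: eq_card => z; rewrite !inE.
    by case: (_ || _).
  apply/eqP; rewrite eqEcard (card_nbr H) cs leqnn andbT.
  apply/subsetP => z; rewrite !inE => /or3P [] /eqP ->; by rewrite ?E1 ?E2 ?E3.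
rewrite (Hs x y) -HP //.
have -> : [set z | (R y z == 3) && (R z x == j)] = [set z | (z \in [:: z1; z2; z3]) && (R z x == j)].
  apply/setP => z; rewrite !inE.
  have := congr1 (fun A : {set X} => z \in A) EN; rewrite /= !inE => ->.
  by [].
by rewrite card_seqP //= !(Hs x).
Qed.

Lemma single_head (s : seq nat) : size s == 1 -> s = [:: head 0 s].
Proof. by case: s => [|a [|b s]]. Qed.

Lemma step_sound X R x0 (H : @hyps X R) C st C' :
  Inv R (gg R x0) C -> step_ok C st = Some C' -> Inv R (gg R x0) C'.
Proof.
have [H0 Hs HP Hlt] := H.
set g := gg R x0 => I.
case: st => [v|a b c1 c2 c3|c d a] /=.
- case E: (defn v) => [[p rf] jc].
  case: ifP => // /andP [/and5P [Hv H4 Hp Hr /andP [Hjc HPt]] Hsz] [<-].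
  have Hp40 : p < nN by apply: ltn_trans Hv.
  have Hr40 : rf < nN by apply: ltn_trans Hv.
  have Eh := single_head Hsz.
  have Rpr : R (g p) (g rf) = head 0 (getC C p rf).
    by have := I p rf Hp40 Hr40; rewrite {1}Eh inE => /eqP.
  have Hgv : g v = odflt x0 [pick z | (R (g p) z == 3) && (R z (g rf) == jc)].
    rewrite /g gg_def // /gnew E.
    have -> : (v == 0) = false by apply/negbTE; rewrite -lt0n; apply: leq_trans H4.
    have -> : (v < 4) = false by apply/negbTE; rewrite -leqNgt.
    by rewrite !build_gg // ltnW.
  have [z Hz] : exists z, (R (g p) z == 3) && (R z (g rf) == jc).
    have : 0 < #|[set z | (R (g p) z == 3) && (R z (g rf) == jc)]| by rewrite HP // Rpr.
    by case/card_gt0P => z; rewrite inE => Hz; exists z.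
  have [Pgv1 Pgv2] : R (g p) (g v) = 3 /\ R (g v) (g rf) = jc.
    rewrite Hgv; case: pickP => [z' /andP [/eqP -> /eqP ->]|/(_ z)] //.
    by rewrite Hz.
  apply: setsym_sound => //; last by rewrite Pgv2 inE.
  by apply: setsym_sound => //; rewrite Pgv1 inE.
- case: ifP => //.
  move=> /and5P [Ha Hb Hc1 Hc2 /and5P [Hc3 Hsz /eqP E1 /eqP E2 /and4P [/eqP E3 N12 N13 N23]]] [<-].
  set h := head 0 (getC C a b).
  have Rab : R (g a) (g b) = h.
    by have := I a b Ha Hb; rewrite {1}(single_head Hsz) inE => /eqP.
  have R1c : forall c, c < nN -> getC C b c = [:: 3] -> R (g b) (g c) = 3.
    by move=> c Hc Ec; have := I b c Hb Hc; rewrite Ec inE => /eqP.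
  have Nc : forall c c', c < nN -> c' < nN -> 0 \notin getC C c c' -> g c != g c'.
    move=> c c' Hc Hc' Hn; apply/negP => /eqP Ec.
    have := I c c' Hc Hc'; rewrite Ec.
    have /eqP -> : R (g c') (g c') == 0 by rewrite H0.
    by rewrite (negbTE Hn).
  have F : feas h (R (g a) (g c1)) (R (g a) (g c2)) (R (g a) (g c3)).
    apply/allP => j; rewrite mem_iota add0n => Hj.
    by rewrite (@count3 X R H (g a) (g b)) ?R1c ?Nc // Rab.
  have M1 := I a c1 Ha Hc1; have M2 := I a c2 Ha Hc2; have M3 := I a c3 Ha Hc3.
  apply: setsym_sound => //; last first.
    rewrite mem_filter M3 andbT; apply/hasP; exists (R (g a) (g c1)) => //.
    by apply/hasP; exists (R (g a) (g c2)).
  apply: setsym_sound => //; last first.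
    rewrite mem_filter M2 andbT; apply/hasP; exists (R (g a) (g c1)) => //.
    by apply/hasP; exists (R (g a) (g c3)).
  apply: setsym_sound => //.
  rewrite mem_filter M1 andbT; apply/hasP; exists (R (g a) (g c2)) => //.
  by apply/hasP; exists (R (g a) (g c3)).
- case: ifP => // /and4P [Hc Hd Ha Hn] [<-].
  apply: setsym_sound => //.
  change (R (g c) (g d) \in [seq j <- iota 0 12 | j != 0]).
  rewrite mem_filter mem_iota add0n Hlt leq0n !andbT.
  apply/eqP => E0.
  have /eqP Ecd : g c == g d by rewrite -H0 E0.
  move/negP: Hn; apply; apply/hasP; exists (R (g a) (g c)); first exact: I.
  by rewrite Ecd; exact: I.
Qed.

Lemma run_sound X R x0 (H : @hyps X R) l C C' :
  Inv R (gg R x0) C -> run C l = Some C' -> Inv R (gg R x0) C'.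
Proof.
elim: l C => [|st l IH] C I /=; first by case=> <-.
case E: (step_ok C st) => [C1|] // Hr.
exact: (IH C1 (step_sound H I E) Hr).
Qed.

Lemma size_nbrs X R x0 (H : @hyps X R) : size (nbrs R x0) = 3.
Proof. by rewrite /nbrs -cardE (card_nbr H). Qed.

Lemma gg_small X R x0 (H : @hyps X R) k : 0 < k < 4 ->
  gg R x0 k = nth x0 (nbrs R x0) k.-1.
Proof.
move=> /andP [Hk0 Hk4]; rewrite gg_def; last by apply: leq_trans Hk4 _.
by rewrite /gnew Hk4; case: k Hk0 {Hk4}.
Qed.

Lemma gg0 (X : finType) R (x0 : X) : gg R x0 0 = x0.
Proof. by rewrite gg_def. Qed.

Lemma C0_sound X R x0 (H : @hyps X R) : Inv R (gg R x0) C0.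
Proof.
have [H0 Hs HP Hlt] := H.
set g := gg R x0.
have Hn : forall k, 0 < k < 4 -> R (g 0) (g k) = 3.
  move=> k Hk; rewrite /g gg0 gg_small //.
  have : nth x0 (nbrs R x0) k.-1 \in nbrs R x0.
    by apply: mem_nth; rewrite size_nbrs //; case: k Hk => // k /andP [].
  by rewrite /nbrs mem_enum inE => /eqP.
have Hd : forall k l, 0 < k < 4 -> 0 < l < 4 -> k != l -> R (g k) (g l) \in [seq j <- allJ | j != 0].
  move=> k l Hk Hl Hkl.
  rewrite mem_filter mem_iota add0n Hlt leq0n !andbT H0 /g !gg_small //.
  by rewrite nth_uniq ?size_nbrs ?enum_uniq //; move: Hk Hl Hkl; clear; lia.
rewrite /C0.
do 3!(apply: setsym_sound => //; last exact: Hd).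
do 3!(apply: setsym_sound => //; last by rewrite Hn).
move=> u v Hu Hv; rewrite /getC (nth_map 0) ?size_iota // (nth_map 0) ?size_iota //.
rewrite !nth_iota // !add0n.
case: eqP => [->|_]; first by have /eqP -> : R (g v) (g v) == 0 by rewrite H0.
by rewrite mem_iota add0n Hlt.
Qed.

Lemma engine_result X R x0 (H : @hyps X R) u v :
  u < nN -> v < nN -> R (gg R x0 u) (gg R x0 v) = rD u v.
Proof.
move=> Hu Hv; have := engine_okT.
rewrite /engine_ok.
destruct (run C0 cert) as [C|] eqn:E; last by [].
move=> F.
have I := run_sound H (C0_sound x0 H) E.
move/allP: F => /(_ u); rewrite mem_iota add0n => /(_ Hu) /allP /(_ v).
rewrite mem_iota add0n => /(_ Hv) /eqP Ec.
by have := I u v Hu Hv; rewrite Ec inE => /eqP.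
Qed.

Lemma scheme_count (X I : finType) (rel : X -> X -> I) r0 :
  is_assoc_scheme rel r0 -> forall x y i j,
  #|[set z | (rel x z == i) && (rel z y == j)]| = pnum rel (rel x y) i j.
Proof.
case=> _ [_ [_ H4]] x y i j.
have [p Hp] := H4 (rel x y) i j.
rewrite Hp // /pnum; case: pickP => [[a b] /= /eqP Hab|/(_ (x, y))]; last by rewrite /= eqxx.
by rewrite Hp.
Qed.

Lemma sum_vtab : \sum_(h < 12) Vtab h = 40.
Proof. by rewrite !big_ord_recr big_ord0. Qed.

Unset Implicit Arguments.
Set Strict Implicit.

Theorem proposition3p1 (X I : finType) (rel : X -> X -> I) (r0 r1 : I) :
  is_assoc_scheme rel r0 ->
  same_rdd rel r0 r1 D_rel D_R0 D_R1 ->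
  scheme_iso rel r1 D_rel D_R1.
Proof.
move=> Hsch [sigma [[sinv Hs1 Hs2] Hr0 Hr1 HV HP]].
have Hsch' := Hsch; case: Hsch' => H1 [Hsym [Hne _]].
have sinj : injective sigma by apply: can_inj Hs1.
pose R (x y : X) := code (sigma (rel x y)).
have eqR : forall x y (j : nat), j < 12 -> (R x y == j) = (rel x y == sinv (jj j)).
  move=> x y j Hj; rewrite /R -(code_jj Hj) code_inj code_jj //.
  apply/eqP/eqP => [<-|->]; [by rewrite Hs1 | by rewrite Hs2].
have H : hyps R.
  split.
  - move=> x y; rewrite eqR // -H1; congr (_ == _).
    by rewrite -R0_jj -Hr0 Hs1.
  - by move=> x y; rewrite /R Hsym.
  - move=> x y j Hj.
    have -> : [set z | (R x z == 3) && (R z y == j)] =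
              [set z | (rel x z == r1) && (rel z y == sinv (jj j))].
      apply/setP => z; rewrite !inE !eqR //.
      by rewrite -R1_jj -[in sinv D_R1]Hr1 Hs1.
    by rewrite (scheme_count Hsch) HP Hs2 D_P code_jj.
  - by move=> x y; exact: code_lt.
have [x0 _] : exists x0 : X, True.
  by have [x [y _]] := Hne r0; exists x.
pose g := gg R x0.
have Eg : forall u v, u < 40 -> v < 40 -> D_rel (nm u) (nm v) = sigma (rel (g u) (g v)).
  move=> u v Hu Hv; rewrite D_names // -(engine_result x0 H Hu Hv).
  by rewrite jj_code.
have cardX : #|X| = 40.
  rewrite -sum1_card (partition_big (fun z => Ordinal (code_lt (sigma (rel x0 z)))) xpredT) //=.
  rewrite -sum_vtab; apply: eq_bigr => h _.
  rewrite sum1_card.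
  have -> : #|[pred z | true && (Ordinal (code_lt (sigma (rel x0 z))) == h)]|
            = #|[set z | (rel x0 z == sinv (jj h)) && (rel z x0 == sinv (jj h))]|.
    apply: eq_card => z; rewrite !inE /= (Hsym z x0) andbb -eqR //.
  rewrite (scheme_count Hsch).
  have /eqP -> : rel x0 x0 == r0 by rewrite H1.
  have := HV (sinv (jj h)); rewrite /valency => ->.
  by rewrite Hs2 -/(valency D_rel D_R0 (jj h)) D_V code_jj.
pose gm (i : 'I_40) : X := g i.
have nm_inj : forall u v, u < 40 -> v < 40 -> nm u = nm v -> u = v.
  move=> u v Hu Hv E; apply/eqP.
  by rewrite -(nth_uniq ((@Ordinal 10 0 erefl, false), false) _ _ nm_uniq) ?nm_size //; apply/eqP.
have gm_inj : injective gm.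
  move=> i j E; apply: val_inj; apply: nm_inj; rewrite ?ltn_ord //.
  apply/eqP; rewrite -dcode0.
  have := chk4T; rewrite /chk4 => /allP /(_ i); rewrite mem_iota add0n ltn_ord => /(_ isT).
  move=> /allP /(_ j); rewrite mem_iota add0n ltn_ord => /(_ isT) /eqP ->.
  rewrite -(engine_result x0 H (ltn_ord i) (ltn_ord j)) -/g.
  by rewrite /gm in E; rewrite E; case: H => H0 _ _ _; rewrite H0.
have [ginv Hg1 Hg2] : bijective gm.
  by apply: inj_card_bij gm_inj _; rewrite cardX card_ord.
pose f (x : X) : Dvert := nm (ginv x).
pose F (w : Dvert) : X := gm (inord (index w nmlist)).
have Hidx : forall w, index w nmlist < 40.
  by move=> w; rewrite -nm_size index_mem nm_all.
exists f, sigma; split.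
- exists F => [x|w].
  + rewrite /F /f /nm index_uniq ?nm_uniq ?nm_size ?ltn_ord //.
    by rewrite inord_val Hg2.
  + by rewrite /F /f Hg1 /nm inordK ?nth_index ?nm_all.
- by exists sinv.
- exact: Hr1.
move=> x y.
rewrite /f -{2}(Hg2 x) -{2}(Hg2 y) Eg ?ltn_ord //.
Qed.
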